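(* Let $m\ge 2$ and $n\ge1$ be integers, $0<\delta\le 10^{-6}$, $A=(n+1)^{n+1}n^{-n}$, $f(t)=(At^n(1-t))^m$ on $[0,1]$, and $B=\frac{n}{n+1}$. For $0\le k\le m$ put \[F(k,m,\delta)=\frac{1}{\|f\|_1}\int_0^1(1+\delta t)^{1+k}|f^{(k)}(t)|\,dt,\] where $\|f\|_1=\int_0^1|f(t)|dt$ and $\|f^{(m)}\|_2=\left(\int_0^1|f^{(m)}(t)|^2dt\right)^{1/2}$. Define \[\lambda_0(m,n,\delta)=\frac{2(B^n-B^{n+1})^m(mn+m+1)!}{m!\,(mn)!},\qquad \lambda_1(m,n,\delta)=(1+\delta)^2\frac{2(B^n-B^{n+1})^m(mn+m+1)!}{m!\,(mn)!},\] \[\lambda(m,n,\delta)=\sqrt{\frac{(1+\delta)^{2m+3}-1}{\delta(2m+3)}}\;\frac{(mn+m+1)!}{A^m\,m!\,(mn)!}\,\|f^{(m)}\|_2.\] Then $1\le F(0,m,\delta)\le 1+\delta$, $\lambda_0(m,n,\delta)\le F(1,m,\delta)\le\lambda_1(m,n,\delta)$, and $F(m,m,\delta)\le\lambda(m,n,\delta)$. *)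

(* Defs.v *)
From Stdlib Require Import Reals Factorial.
From Coquelicot Require Import Coquelicot.
Open Scope R_scope.

Definition Acoef (n : nat) : R := (INR n + 1) ^ (n + 1) / (INR n) ^ n.

Definition fpoly (m n : nat) (t : R) : R := (Acoef n * t ^ n * (1 - t)) ^ m.

Definition Bcoef (n : nat) : R := INR n / (INR n + 1).

Definition L1norm (m n : nat) : R := RInt (fun t => Rabs (fpoly m n t)) 0 1.

Definition L2norm_deriv (m n : nat) : R :=
  sqrt (RInt (fun t => (Rabs (Derive_n (fpoly m n) m t)) ^ 2) 0 1).

Definition Ffun (k m n : nat) (delta : R) : R :=
  / L1norm m n *
  RInt (fun t => (1 + delta * t) ^ (1 + k) * Rabs (Derive_n (fpoly m n) k t)) 0 1.

Definition lambda0 (m n : nat) (delta : R) : R :=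
  2 * (Bcoef n ^ n - Bcoef n ^ (n + 1)) ^ m * INR (fact (m * n + m + 1))
  / (INR (fact m) * INR (fact (m * n))).

Definition lambda1 (m n : nat) (delta : R) : R :=
  (1 + delta) ^ 2 *
  (2 * (Bcoef n ^ n - Bcoef n ^ (n + 1)) ^ m * INR (fact (m * n + m + 1))
   / (INR (fact m) * INR (fact (m * n)))).

Definition lambda (m n : nat) (delta : R) : R :=
  sqrt (((1 + delta) ^ (2 * m + 3) - 1) / (delta * INR (2 * m + 3)))
  * (INR (fact (m * n + m + 1))
     / (Acoef n ^ m * INR (fact m) * INR (fact (m * n))))
  * L2norm_deriv m n.

(* Main.v *)
Require Import Defs.
From Stdlib Require Import Reals.
From Coquelicot Require Import Coquelicot.
Open Scope R_scope.
From Stdlib Require Import Lra Lia List Factorial.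
Import ListNotations.
Fixpoint peval (l : list R) (x : R) : R :=
  match l with [] => 0 | a :: l' => a + x * peval l' x end.

Fixpoint padd (l1 l2 : list R) : list R :=
  match l1, l2 with
  | [], _ => l2
  | _, [] => l1
  | a :: l1', b :: l2' => (a + b) :: padd l1' l2'
  end.

Lemma peval_padd l1 l2 x : peval (padd l1 l2) x = peval l1 x + peval l2 x.
Proof.
  revert l2; induction l1 as [|a l1 IH]; intros [|b l2]; simpl; try lra.
  rewrite IH; ring.
Qed.

Fixpoint pder (l : list R) : list R :=
  match l with [] => [] | a :: l' => padd l' (0 :: pder l') end.

Lemma peval_der l x : is_derive (peval l) x (peval (pder l) x).
Proof.
  revert x; induction l as [|a l IH]; intros x; simpl.
  - apply (is_derive_const (K:=R_AbsRing) (V:=R_NormedModule) 0 x).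
  - rewrite peval_padd; simpl.
    apply (is_derive_ext (fun y => a + y * peval l y)); [reflexivity|].
    replace (peval l x + (0 + x * peval (pder l) x)) with (0 + (1 * peval l x + x * peval (pder l) x)) by ring.
    apply (is_derive_plus (fun _ => a) (fun y => y * peval l y)).
    + apply (is_derive_const (K:=R_AbsRing) (V:=R_NormedModule) a x).
    + apply (is_derive_mult (fun y => y) (peval l)).
      * apply (is_derive_id (K:=R_AbsRing)).
      * apply IH.
      * intros; apply Rmult_comm.
Qed.

Lemma Derive_n_peval k l x : Derive_n (peval l) k x = peval (Nat.iter k pder l) x.
Proof.
  revert x; induction k as [|k IH]; intros x; simpl; [reflexivity|].
  rewrite (Derive_ext _ (peval (Nat.iter k pder l))) by (intros; apply IH).
  apply is_derive_unique, peval_der.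
Qed.

Lemma peval_cont l x : continuous (peval l) x.
Proof. apply (ex_derive_continuous (K:=R_AbsRing) (V:=R_NormedModule)). eexists. apply peval_der. Qed.

Fixpoint pmul (l1 l2 : list R) : list R :=
  match l1 with [] => [] | a :: l1' => padd (map (Rmult a) l2) (0 :: pmul l1' l2) end.

Lemma peval_map a l x : peval (map (Rmult a) l) x = a * peval l x.
Proof. induction l as [|b l IH]; simpl; [ring|rewrite IH; ring]. Qed.

Lemma peval_pmul l1 l2 x : peval (pmul l1 l2) x = peval l1 x * peval l2 x.
Proof.
  induction l1 as [|a l1 IH]; simpl; [ring|].
  rewrite peval_padd, peval_map; simpl; rewrite IH; ring.
Qed.

Fixpoint ppow (l : list R) (k : nat) : list R :=
  match k with O => [1] | S k' => pmul l (ppow l k') end.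

Lemma peval_ppow l k x : peval (ppow l k) x = peval l x ^ k.
Proof. induction k as [|k IH]; simpl; [ring|rewrite peval_pmul, IH; ring]. Qed.

Lemma peval_shift n l x : peval (repeat 0 n ++ l) x = x ^ n * peval l x.
Proof. induction n as [|n IH]; simpl; [ring|rewrite IH; ring]. Qed.

Lemma smooth_cont (f : R -> R) k x :
  (exists l, forall t, f t = peval l t) -> continuous (Derive_n f k) x.
Proof.
  intros [l Hl].
  apply (continuous_ext (Derive_n (peval l) k)).
  - intros t; apply Derive_n_ext; intros; symmetry; apply Hl.
  - apply (continuous_ext (peval (Nat.iter k pder l))).
    + intros; symmetry; apply Derive_n_peval.
    + apply peval_cont.
Qed.
Ltac fixR := match goal with |- ?a = ?b => change (@eq R a b) end.

Lemma cont_d (f : R -> R) x : ex_derive f x -> continuous f x.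
Proof. apply (ex_derive_continuous (K:=R_AbsRing) (V:=R_NormedModule)). Qed.

Lemma exRI (f : R -> R) a b : (forall z, Rmin a b <= z <= Rmax a b -> continuous f z) -> ex_RInt f a b.
Proof. apply (ex_RInt_continuous (V:=R_CompleteNormedModule)). Qed.

Lemma FTC (F df : R -> R) a b : a <= b ->
  (forall x, a <= x <= b -> is_derive F x (df x)) ->
  (forall x, a <= x <= b -> continuous df x) -> RInt df a b = F b - F a.
Proof.
  intros hab H1 H2. apply is_RInt_unique.
  apply (is_RInt_derive (V:=R_CompleteNormedModule) F df a b).
  - intros x; rewrite Rmin_left, Rmax_right by lra; apply H1.
  - intros x; rewrite Rmin_left, Rmax_right by lra; apply H2.
Qed.

Lemma beta0 p : RInt (fun t => t^p * (1-t)^0) 0 1 = / INR (S p).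
Proof.
  assert (HD : INR (S p) <> 0) by (apply not_0_INR; lia).
  assert (H := is_RInt_derive (fun t => t^(S p) / INR (S p)) (fun t => t^p * (1-t)^0) 0 1).
  apply is_RInt_unique in H.
  - rewrite H. change (minus ?a ?b) with (Rminus a b).
    rewrite pow1, pow_i by lia. unfold Rdiv. rewrite Rmult_0_l, Rminus_0_r, Rmult_1_l. reflexivity.
  - intros x _. cbv beta. auto_derive; [auto|].
    change (match p with 0%nat => 1 | S _ => INR p + 1 end) with (INR (S p)).
    simpl pred. field. exact HD.
  - intros x _. apply cont_d. auto_derive. auto.
Qed.

Lemma beta_step p q : INR (S p) * RInt (fun t => t^p * (1-t)^(S q)) 0 1
   = INR (S q) * RInt (fun t => t^(S p) * (1-t)^q) 0 1.
Proof.
  assert (H1 : ex_RInt (fun t => t^p * (1-t)^(S q)) 0 1).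
  { apply exRI; intros; apply cont_d; auto_derive; auto. }
  assert (H2 : ex_RInt (fun t => t^(S p) * (1-t)^q) 0 1).
  { apply exRI; intros; apply cont_d; auto_derive; auto. }
  assert (H := FTC (fun t => t^(S p) * (1-t)^(S q))
     (fun t => INR (S p) * (t^p * (1-t)^(S q)) - INR (S q) * (t^(S p) * (1-t)^q)) 0 1).
  cbv beta in H. rewrite (Rminus_diag 1) in H. rewrite !pow_i in H by lia.
  rewrite Rmult_0_l, Rmult_0_r, Rminus_diag in H.
  specialize (H ltac:(lra)).
  assert (H' : RInt (fun t => INR (S p) * (t^p * (1-t)^(S q)) - INR (S q) * (t^(S p) * (1-t)^q)) 0 1 = 0).
  { apply H.
    - intros x _. auto_derive; [auto|].
      change (match p with 0%nat => 1 | S _ => INR p + 1 end) with (INR (S p)).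
      change (match q with 0%nat => 1 | S _ => INR q + 1 end) with (INR (S q)).
      simpl pred. rewrite <- !tech_pow_Rmult. unfold Rminus. ring.
    - intros; apply cont_d; auto_derive; auto. }
  clear H. rename H' into H.
  rewrite (RInt_minus (fun t => INR (S p) * (t^p * (1-t)^(S q))) (fun t => INR (S q) * (t^(S p) * (1-t)^q))) in H.
  2,3: apply (ex_RInt_scal (V:=R_NormedModule)); assumption.
  rewrite (RInt_scal (fun t => (t^p * (1-t)^(S q)))) in H by assumption.
  rewrite (RInt_scal (fun t => (t^(S p) * (1-t)^q))) in H by assumption.
  change (minus ?a ?b) with (Rminus a b) in H. change (scal ?a ?b) with (Rmult a b) in H.
  match type of H with ?a = _ => assert (E : @eq R a 0) by exact H end. lra.

Qed.

Lemma INR_fact_pos k : 0 < INR (fact k).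
Proof. apply lt_0_INR, lt_O_fact. Qed.

Lemma beta q : forall p, RInt (fun t => t^p * (1-t)^q) 0 1 =
  INR (fact p) * INR (fact q) / INR (fact (p + q + 1)).
Proof.
  induction q as [|q IH]; intros p.
  - rewrite beta0. fixR. replace (p + 0 + 1)%nat with (S p) by lia.
    change (fact (S p)) with (S p * fact p)%nat. rewrite mult_INR. simpl (fact 0). simpl (INR 1).
    assert (H := INR_fact_pos p). assert (0 < INR (S p)) by (apply lt_0_INR; lia).
    field. lra.
  - assert (H := beta_step p q). rewrite IH in H.
    replace (S p + q + 1)%nat with (p + S q + 1)%nat in H by lia.
    change (fact (S p)) with (S p * fact p)%nat in H.
    change (fact (S q)) with (S q * fact q)%nat.
    rewrite mult_INR in *.
    assert (H0 := INR_fact_pos (p + S q + 1)). assert (0 < INR (S p)) by (apply lt_0_INR; lia).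
    fixR. apply (Rmult_eq_reg_l (INR (S p))); [|lra].
    rewrite H. field. lra.
Qed.

Section Main.
Variables (m n : nat) (hm : (2 <= m)%nat) (hn : (1 <= n)%nat).

Let A := Acoef n.
Let f := fpoly m n.

Lemma A_pos : 0 < Acoef n.
Proof.
  unfold Acoef. assert (0 < INR n) by (apply lt_0_INR; lia).
  apply Rdiv_lt_0_compat; apply pow_lt; lra.
Qed.

Lemma f_poly : exists l, forall t, fpoly m n t = peval l t.
Proof.
  exists (ppow (repeat 0 n ++ [Acoef n; - Acoef n]) m). intros t.
  rewrite peval_ppow, peval_shift. unfold fpoly. simpl. f_equal. ring.
Qed.

Lemma f_cont k x : continuous (Derive_n (fpoly m n) k) x.
Proof. apply smooth_cont, f_poly. Qed.

Lemma f_eq t : fpoly m n t = Acoef n ^ m * (t ^ (m * n) * (1 - t) ^ m).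
Proof.
  unfold fpoly. rewrite !Rpow_mult_distr, Nat.mul_comm, pow_mult. ring.
Qed.

Lemma f_ge0 t : 0 <= t <= 1 -> 0 <= fpoly m n t.
Proof.
  intros Ht. rewrite f_eq. assert (H := A_pos).
  apply Rmult_le_pos; [apply pow_le; lra|].
  apply Rmult_le_pos; apply pow_le; lra.
Qed.

Definition Nnorm := Acoef n ^ m * (INR (fact (m * n)) * INR (fact m) / INR (fact (m * n + m + 1))).

Lemma Nnorm_pos : 0 < Nnorm.
Proof.
  unfold Nnorm. assert (H := A_pos).
  apply Rmult_lt_0_compat; [apply pow_lt; lra|].
  apply Rdiv_lt_0_compat; [apply Rmult_lt_0_compat|]; apply INR_fact_pos.
Qed.

Lemma L1_eq : L1norm m n = Nnorm.
Proof.
  unfold L1norm, Nnorm.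
  rewrite (RInt_ext _ (fun t => scal (Acoef n ^ m) (t ^ (m * n) * (1 - t) ^ m))).
  2:{ intros x Hx. rewrite Rmin_left, Rmax_right in Hx by lra.
      rewrite Rabs_pos_eq by (apply f_ge0; lra). apply f_eq. }
  rewrite (RInt_scal (V:=R_CompleteNormedModule) (fun t => t ^ (m * n) * (1 - t) ^ m)).
  2:{ apply exRI; intros; apply cont_d; auto_derive; auto. }
  rewrite beta. reflexivity.
Qed.


Definition dfp t := (Acoef n * (INR n * t^(pred n) * (1-t) - t^n)) *
   (INR m * (Acoef n * t^n * (1-t))^(pred m)).

Lemma dfp_is t : is_derive (fpoly m n) t (dfp t).
Proof. unfold fpoly, dfp. auto_derive; [auto|]. unfold Rminus. ring. Qed.

Lemma D1 t : Derive_n (fpoly m n) 1 t = dfp t.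
Proof. change (Derive (fpoly m n) t = dfp t). apply is_derive_unique, dfp_is. Qed.

Lemma dfp_cont t : continuous dfp t.
Proof. apply cont_d. unfold dfp. auto_derive. auto. Qed.

Definition Bc := INR n / (INR n + 1).

Lemma dfp_fact t : dfp t = Acoef n * t^(pred n) * (INR n - (INR n + 1) * t) *
   (INR m * (Acoef n * t^n * (1-t))^(pred m)).
Proof.
  unfold dfp. destruct n as [|k]; [lia|]. simpl pred. rewrite <- tech_pow_Rmult. ring.
Qed.

Lemma g_ge0 t : 0 <= t <= 1 -> 0 <= INR m * (Acoef n * t^n * (1-t))^(pred m).
Proof.
  intros Ht. assert (H := A_pos). apply Rmult_le_pos; [apply pos_INR|].
  apply pow_le. apply Rmult_le_pos; [apply Rmult_le_pos|]; try lra. apply pow_le; lra.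
Qed.

Lemma Bc_in : 0 < Bc < 1.
Proof.
  unfold Bc. assert (0 < INR n) by (apply lt_0_INR; lia). split.
  - apply Rdiv_lt_0_compat; lra.
  - apply Rmult_lt_reg_r with (INR n + 1); [lra|]. unfold Rdiv. rewrite Rmult_assoc, Rinv_l; lra.
Qed.

Lemma dfp_pos t : 0 <= t <= Bc -> 0 <= dfp t.
Proof.
  intros Ht. assert (HB := Bc_in). rewrite dfp_fact. assert (H := A_pos).
  apply Rmult_le_pos; [|apply g_ge0; lra].
  apply Rmult_le_pos; [apply Rmult_le_pos; [lra|apply pow_le; lra]|].
  unfold Bc in Ht. assert (0 < INR n) by (apply lt_0_INR; lia).
  assert (t * (INR n + 1) <= INR n).
  { destruct Ht as [_ Ht]. apply Rmult_le_compat_r with (r := INR n + 1) in Ht; [|lra].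
    unfold Rdiv in Ht. rewrite Rmult_assoc, Rinv_l in Ht; lra. }
  lra.
Qed.

Lemma dfp_neg t : Bc <= t <= 1 -> dfp t <= 0.
Proof.
  intros Ht. assert (HB := Bc_in). rewrite dfp_fact. assert (H := A_pos).
  assert (0 <= Acoef n * t ^ Init.Nat.pred n) by (apply Rmult_le_pos; [lra|apply pow_le; lra]).
  assert (H2 := g_ge0 t ltac:(lra)).
  unfold Bc in Ht. assert (0 < INR n) by (apply lt_0_INR; lia).
  assert (INR n <= t * (INR n + 1)).
  { destruct Ht as [Ht _]. apply Rmult_le_compat_r with (r := INR n + 1) in Ht; [|lra].
    unfold Rdiv in Ht. rewrite Rmult_assoc, Rinv_l in Ht; lra. }
  assert (0 <= Acoef n * t ^ Init.Nat.pred n * ((INR n + 1) * t - INR n)) by (apply Rmult_le_pos; lra).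
  assert (0 <= Acoef n * t ^ Init.Nat.pred n * ((INR n + 1) * t - INR n) * (INR m * (Acoef n * t ^ n * (1 - t)) ^ Init.Nat.pred m)) by (apply Rmult_le_pos; lra).
  nra.
Qed.

Lemma f_B : fpoly m n Bc = 1.
Proof.
  unfold fpoly. replace (Acoef n * Bc ^ n * (1 - Bc)) with 1; [apply pow1|].
  unfold Bc, Acoef. assert (0 < INR n) by (apply lt_0_INR; lia).
  replace (1 - INR n / (INR n + 1)) with (/ (INR n + 1)) by (field; lra).
  unfold Rdiv. rewrite Rpow_mult_distr, pow_inv, pow_add. simpl (_ ^ 1).
  field. split; [lra|]. split; apply pow_nonzero; lra.
Qed.

Lemma f_0 : fpoly m n 0 = 0.
Proof. unfold fpoly. rewrite pow_i by lia. rewrite Rmult_0_r, Rmult_0_l. apply pow_i; lia. Qed.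

Lemma f_1 : fpoly m n 1 = 0.
Proof. unfold fpoly. rewrite Rminus_diag, Rmult_0_r. apply pow_i; lia. Qed.

Lemma absdfp_cont t : continuous (fun t => Rabs (dfp t)) t.
Proof. apply (continuous_comp dfp Rabs). apply dfp_cont. apply continuous_Rabs. Qed.

Lemma int_absdfp : RInt (fun t => Rabs (dfp t)) 0 1 = 2.
Proof.
  assert (HB := Bc_in).
  rewrite <- (RInt_Chasles (V:=R_CompleteNormedModule) _ 0 Bc 1).
  2,3: apply exRI; intros; apply absdfp_cont.
  rewrite (FTC (fpoly m n) (fun t => Rabs (dfp t)) 0 Bc); [| lra | |].
  2:{ intros x Hx. rewrite Rabs_pos_eq by (apply dfp_pos; lra). apply dfp_is. }
  2:{ intros; apply absdfp_cont. }
  rewrite (FTC (fun t => - fpoly m n t) (fun t => Rabs (dfp t)) Bc 1); [| lra | |].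
  2:{ intros x Hx. rewrite Rabs_left1 by (apply dfp_neg; lra).
      apply (is_derive_opp (fpoly m n)). apply dfp_is. }
  2:{ intros; apply absdfp_cont. }
  rewrite f_B, f_0, f_1. change (plus ?a ?b) with (Rplus a b). fixR. ring.
Qed.


Lemma gB : Acoef n * Bc ^ n * (1 - Bc) = 1.
Proof.
  unfold Bc, Acoef. assert (0 < INR n) by (apply lt_0_INR; lia).
  replace (1 - INR n / (INR n + 1)) with (/ (INR n + 1)) by (field; lra).
  unfold Rdiv. rewrite Rpow_mult_distr, pow_inv, pow_add. simpl (_ ^ 1).
  field. split; [lra|]. split; apply pow_nonzero; lra.
Qed.

End Main.

Lemma cont_mult (f g : R -> R) x : continuous f x -> continuous g x -> continuous (fun t => f t * g t) x.
Proof. intros; apply (continuous_mult (K:=R_AbsRing) f g x); assumption. Qed.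

Lemma cont_pow (f : R -> R) k x : continuous f x -> continuous (fun t => f t ^ k) x.
Proof. intros H. apply (continuous_comp f (fun y => y ^ k)); [exact H|]. apply cont_d. auto_derive. auto. Qed.

Lemma cont_abs (f : R -> R) x : continuous f x -> continuous (fun t => Rabs (f t)) x.
Proof. intros H. apply (continuous_comp f Rabs); [exact H|]. apply continuous_Rabs. Qed.

Lemma weight_bounds (w h : R -> R) c :
  (forall x, continuous w x) -> (forall x, continuous h x) ->
  (forall x, 0 < x < 1 -> 0 <= h x /\ 1 <= w x <= c) ->
  RInt h 0 1 <= RInt (fun t => w t * h t) 0 1 <= c * RInt h 0 1.
Proof.
  intros Hw Hh Hb.
  assert (E1 : ex_RInt h 0 1) by (apply exRI; auto).
  assert (E2 : ex_RInt (fun t => w t * h t) 0 1) by (apply exRI; intros; apply cont_mult; auto).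
  split.
  - apply RInt_le; auto; [lra|]. intros x Hx. destruct (Hb x Hx). nra.
  - replace (c * RInt h 0 1) with (RInt (fun t => c * h t) 0 1).
    + apply RInt_le; auto; [lra| |].
      * apply exRI; intros; apply cont_mult; auto. apply continuous_const.
      * intros x Hx. destruct (Hb x Hx). nra.
    + apply (RInt_scal (V:=R_CompleteNormedModule) h 0 1 c E1).
Qed.

Lemma CS (g h : R -> R) :
  (forall x, continuous g x) -> (forall x, continuous h x) ->
  0 < RInt (fun t => g t ^ 2) 0 1 ->
  RInt (fun t => g t * h t) 0 1 <= sqrt (RInt (fun t => g t ^ 2) 0 1) * sqrt (RInt (fun t => h t ^ 2) 0 1).
Proof.
  intros Hg Hh Ha.
  set (a := RInt (fun t => g t ^ 2) 0 1). set (c := RInt (fun t => h t ^ 2) 0 1).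
  set (I := RInt (fun t => g t * h t) 0 1).
  assert (Eg : ex_RInt (fun t => g t ^ 2) 0 1) by (apply exRI; intros; apply cont_pow; auto).
  assert (Eh : ex_RInt (fun t => h t ^ 2) 0 1) by (apply exRI; intros; apply cont_pow; auto).
  assert (Hc : 0 <= c).
  { apply RInt_ge_0; auto; [lra|]. intros; apply pow2_ge_0. }
  assert (Key : forall mu, 0 < mu -> I <= / 2 * (mu * a + / mu * c)).
  { intros mu Hmu.
    assert (R1 : RInt (fun t => / 2 * (mu * g t ^ 2 + / mu * h t ^ 2)) 0 1 = / 2 * (mu * a + / mu * c)).
    { rewrite (RInt_scal (V:=R_CompleteNormedModule) (fun t => mu * g t ^ 2 + / mu * h t ^ 2)).
      2:{ apply exRI; intros. apply (continuous_plus (K:=R_AbsRing) (V:=R_NormedModule) (fun t => mu * g t ^ 2) (fun t => / mu * h t ^ 2));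
          apply cont_mult; try apply continuous_const; apply cont_pow; auto. }
      rewrite (RInt_plus (V:=R_CompleteNormedModule) (fun t => mu * g t ^ 2) (fun t => / mu * h t ^ 2)).
      2,3: apply (ex_RInt_scal (V:=R_NormedModule)); assumption.
      rewrite (RInt_scal (V:=R_CompleteNormedModule) (fun t => g t ^ 2)) by assumption.
      rewrite (RInt_scal (V:=R_CompleteNormedModule) (fun t => h t ^ 2)) by assumption.
      reflexivity. }
    rewrite <- R1. apply RInt_le; [lra| | |].
    - apply exRI; intros; apply cont_mult; auto.
    - apply exRI; intros. apply cont_mult; [apply continuous_const|].
      apply (continuous_plus (K:=R_AbsRing) (V:=R_NormedModule) (fun t => mu * g t ^ 2) (fun t => / mu * h t ^ 2));
          apply cont_mult; try apply continuous_const; apply cont_pow; auto.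
    - intros x _. assert (0 <= (mu * g x - h x) ^ 2) by apply pow2_ge_0.
      assert (mu * (g x * h x) <= mu * (/ 2 * (mu * g x ^ 2 + / mu * h x ^ 2))); [|nra].
      replace (mu * (/ 2 * (mu * g x ^ 2 + / mu * h x ^ 2))) with (/ 2 * (mu * g x) ^ 2 + / 2 * h x ^ 2) by (field; lra).
      nra. }
  assert (Ha' : 0 < a) by exact Ha. clearbody a c I. clear Ha.
  assert (Hsa : 0 < sqrt a) by (apply sqrt_lt_R0; exact Ha').
  destruct (Rle_lt_or_eq_dec 0 c Hc) as [Hc0|Hc0].
  - assert (Hsc : 0 < sqrt c) by (apply sqrt_lt_R0; lra).
    specialize (Key (sqrt c / sqrt a) ltac:(apply Rdiv_lt_0_compat; lra)).
    replace (/ 2 * (sqrt c / sqrt a * a + / (sqrt c / sqrt a) * c)) with (sqrt a * sqrt c) in Key; [exact Key|].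
    assert (Ea := sqrt_sqrt a ltac:(lra)). assert (Ec := sqrt_sqrt c Hc).
    set (sa := sqrt a) in *. set (sc := sqrt c) in *. rewrite <- Ea, <- Ec. field. split; lra.
  - rewrite <- Hc0, sqrt_0, Rmult_0_r.
    destruct (Rle_or_lt I 0) as [HI|HI]; [exact HI|].
    specialize (Key (I / a) ltac:(apply Rdiv_lt_0_compat; lra)).
    rewrite <- Hc0 in Key.
    replace (/ 2 * (I / a * a + / (I / a) * 0)) with (I / 2) in Key by (field; lra). lra.
Qed.


Lemma int_pow d k : 0 < d ->
  RInt (fun t => (1 + d * t) ^ k) 0 1 = ((1 + d) ^ (S k) - 1) / (d * INR (S k)).
Proof.
  intros Hd. assert (HK : 0 < INR (S k)) by (apply lt_0_INR; lia).
  rewrite (FTC (fun t => (1 + d * t) ^ (S k) / (d * INR (S k))) (fun t => (1 + d * t) ^ k) 0 1); [|lra| |].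
  - fixR. rewrite Rmult_0_r, Rplus_0_r, pow1, Rmult_1_r. field. lra.
  - intros x _. auto_derive; [auto|].
    change (match k with 0%nat => 1 | S _ => INR k + 1 end) with (INR (S k)).
    simpl pred. field. lra.
  - intros; apply cont_d; auto_derive; auto.
Qed.

Theorem lemma3 (m n : nat) (delta : R)
  (hm : (2 <= m)%nat) (hn : (1 <= n)%nat)
  (hd0 : 0 < delta) (hd1 : delta <= / 1000000) :
  (1 <= Ffun 0 m n delta <= 1 + delta) /\
  (lambda0 m n delta <= Ffun 1 m n delta <= lambda1 m n delta) /\
  (Ffun m m n delta <= lambda m n delta).
Proof.
  assert (HN : 0 < Nnorm m n) by (apply Nnorm_pos; assumption).
  assert (HL : L1norm m n = Nnorm m n) by (apply L1_eq; assumption).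
  split; [|split].
  - unfold Ffun. rewrite HL.
    assert (W := weight_bounds (fun t => (1 + delta * t) ^ (1 + 0)) (fun t => Rabs (fpoly m n t)) (1 + delta)).
    destruct W as [W1 W2].
    + intros; apply cont_d; auto_derive; auto.
    + intros; apply cont_abs. exact (f_cont m n 0 x).
    + intros x Hx. split; [apply Rabs_pos|]. simpl. nra.
    + change (RInt (fun t => Rabs (fpoly m n t)) 0 1) with (L1norm m n) in W1, W2.
      rewrite HL in W1, W2.
      change (RInt (fun t => (1 + delta * t) ^ (1 + 0) * Rabs (Derive_n (fpoly m n) 0 t)) 0 1)
        with (RInt (fun t => (1 + delta * t) ^ (1 + 0) * Rabs (fpoly m n t)) 0 1).
      set (X := RInt (fun t => (1 + delta * t) ^ (1 + 0) * Rabs (fpoly m n t)) 0 1) in *.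
      clearbody X. split.
      * apply (Rmult_le_reg_l (Nnorm m n)); [lra|]. rewrite <- Rmult_assoc, Rinv_r; lra.
      * apply (Rmult_le_reg_l (Nnorm m n)); [lra|]. rewrite <- Rmult_assoc, Rinv_r; lra.
  - assert (L0 : lambda0 m n delta = 2 * / Nnorm m n).
    { assert (G := gB m n hm hn). unfold Bc in G. unfold lambda0, Nnorm, Bcoef.
      replace ((INR n / (INR n + 1)) ^ n - (INR n / (INR n + 1)) ^ (n + 1)) with (/ Acoef n).
      2:{ rewrite pow_add. assert (HA := A_pos m n hm hn). apply (Rmult_eq_reg_l (Acoef n)); [|lra].
          rewrite Rinv_r by lra. set (B := INR n / (INR n + 1)) in *. symmetry. transitivity (Acoef n * B ^ n * (1 - B)); [simpl; ring | exact G]. }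
      rewrite pow_inv. assert (HA := A_pos m n hm hn).
      assert (H1 := INR_fact_pos m). assert (H2 := INR_fact_pos (m * n)). assert (H3 := INR_fact_pos (m * n + m + 1)).
      assert (H4 : Acoef n ^ m <> 0) by (apply pow_nonzero; lra).
      field. repeat split; lra. }
    change (lambda1 m n delta) with ((1 + delta) ^ 2 * lambda0 m n delta). rewrite L0.
    unfold Ffun. rewrite HL.
    rewrite (RInt_ext (fun t => (1 + delta * t) ^ (1 + 1) * Rabs (Derive_n (fpoly m n) 1 t))
       (fun t => (1 + delta * t) ^ (1 + 1) * Rabs (dfp m n t))).
    2:{ intros x _. rewrite D1. reflexivity. }
    assert (W := weight_bounds (fun t => (1 + delta * t) ^ (1 + 1)) (fun t => Rabs (dfp m n t)) ((1 + delta) ^ 2)).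
    destruct W as [W1 W2].
    + intros; apply cont_d; auto_derive; auto.
    + intros; apply absdfp_cont.
    + intros x Hx. split; [apply Rabs_pos|]. simpl.
      assert (1 <= 1 + delta * x <= 1 + delta) by nra. split; nra.
    + rewrite int_absdfp in W1, W2 by assumption.
      set (X := RInt (fun t => (1 + delta * t) ^ (1 + 1) * Rabs (dfp m n t)) 0 1) in *.
      clearbody X. split.
      * apply (Rmult_le_reg_l (Nnorm m n)); [lra|].
        rewrite (Rmult_comm 2 (/ Nnorm m n)), <- !Rmult_assoc, Rinv_r, !Rmult_1_l by lra. lra.
      * apply (Rmult_le_reg_l (Nnorm m n)); [lra|]. rewrite <- Rmult_assoc, Rinv_r by lra.
        replace (Nnorm m n * ((1 + delta) ^ 2 * (2 * / Nnorm m n))) with ((1 + delta) ^ 2 * 2) by (field; lra).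
        lra.
  - unfold Ffun, lambda, L2norm_deriv. rewrite HL.
    assert (C := CS (fun t => (1 + delta * t) ^ (1 + m)) (fun t => Rabs (Derive_n (fpoly m n) m t))).
    assert (EK : RInt (fun t => ((1 + delta * t) ^ (1 + m)) ^ 2) 0 1 =
       ((1 + delta) ^ (2 * m + 3) - 1) / (delta * INR (2 * m + 3))).
    { rewrite (RInt_ext _ (fun t => (1 + delta * t) ^ (2 * m + 2))).
      2:{ intros x _. rewrite <- pow_mult. f_equal. lia. }
      rewrite int_pow by lra. replace (S (2 * m + 2)) with (2 * m + 3)%nat by lia. reflexivity. }
    assert (KP : 0 < ((1 + delta) ^ (2 * m + 3) - 1) / (delta * INR (2 * m + 3))).
    { apply Rdiv_lt_0_compat.
      - assert (1 < (1 + delta) ^ (2 * m + 3)) by (apply Rlt_pow_R1; [lra|lia]). lra.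
      - apply Rmult_lt_0_compat; [lra|]. apply lt_0_INR; lia. }
    cbv beta in C. rewrite EK in C.
    specialize (C ltac:(intros; apply cont_d; auto_derive; auto)
                  ltac:(intros; apply cont_abs; exact (f_cont m n m x)) KP).
    assert (EN : / Nnorm m n = INR (fact (m * n + m + 1)) / (Acoef n ^ m * INR (fact m) * INR (fact (m * n)))).
    { unfold Nnorm. assert (HA := A_pos m n hm hn).
      assert (H1 := INR_fact_pos m). assert (H2 := INR_fact_pos (m * n)). assert (H3 := INR_fact_pos (m * n + m + 1)).
      assert (H4 : Acoef n ^ m <> 0) by (apply pow_nonzero; lra).
      field. repeat split; lra. }
    rewrite EN.
    assert (0 < INR (fact (m * n + m + 1)) / (Acoef n ^ m * INR (fact m) * INR (fact (m * n)))) by (rewrite <- EN; apply Rinv_0_lt_compat; lra).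
    set (Q := INR (fact (m * n + m + 1)) / (Acoef n ^ m * INR (fact m) * INR (fact (m * n)))) in *.
    set (I := RInt _ 0 1) in C. set (sK := sqrt _) in C. set (sC := sqrt _) in C.
    change (Q * I <= sK * Q * sC).
    rewrite (Rmult_comm sK), Rmult_assoc. apply Rmult_le_compat_l; lra.
Qed.
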